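(* Let $(\Omega,\mathcal{F})$ be a measurable space, $\mathrm{B}_b$ the space of bounded real-valued measurable functions, $\mathbb{P}$ a probability measure on $(\Omega,\mathcal{F})$, and $H\colon\mathrm{B}_b\to\mathbb{R}$ a premium principle that is dominated by $\mathbb{P}$, i.e. $H(X)=H(Y)$ for all $X,Y\in\mathrm{B}_b$ with $X=Y$ $\mathbb{P}$-a.s. Then $R_{\mathrm{Max}}(X):=\inf\{H(X_0)\mid X_0\in\mathrm{B}_b,\ X_0\ge X\}$, $X\in\mathrm{B}_b$, is dominated by $\mathbb{P}$.
   Context: A premium principle is a map $H\colon\mathrm{B}_b\to\mathbb{R}$ with $H(X+m)=H(X)+m$ for $m\in\mathbb{R}$, $H(0)=0$, and $H(X)\ge0$ for $X\ge0$, where $\le$ is the pointwise order. *)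

(* Defs.v *)
From HB Require Import structures.
From mathcomp Require Import all_boot all_order all_algebra.
From mathcomp Require Import all_classical all_reals all_analysis.
Set Implicit Arguments. Unset Strict Implicit. Unset Printing Implicit Defensive.
Import Order.TTheory GRing.Theory Num.Theory.
Local Open Scope classical_set_scope.
Local Open Scope ring_scope.

Definition Bb d (T : measurableType d) (R : realType) : set (T -> R) :=
  [set f : T -> R | measurable_fun setT f /\ exists M : R, forall x, `|f x| <= M].

(* Premium principle on B_b (H is a map defined on all functions, but only
   its values on B_b matter). *)
Definition premium_principle d (T : measurableType d) (R : realType)
  (H : (T -> R) -> R) : Prop :=
  [/\ forall X m, @Bb _ T R X -> H (fun x => X x + m) = H X + m,
      H (fun _ => 0) = 0
    & forall X, @Bb _ T R X -> (forall x, 0 <= X x) -> 0 <= H X].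

Definition dominated d (T : measurableType d) (R : realType)
  (P : probability T R) (H : (T -> R) -> R) : Prop :=
  forall X Y, @Bb _ T R X -> @Bb _ T R Y -> {ae P, forall x, X x = Y x} -> H X = H Y.

Definition R_Max d (T : measurableType d) (R : realType)
  (H : (T -> R) -> R) (X : T -> R) : R :=
  inf [set H X0 | X0 in [set X0 | @Bb _ T R X0 /\ forall x, X x <= X0 x]].

(* Main.v *)
Require Import Defs.
From mathcomp Require Import all_boot all_order all_algebra.
From mathcomp Require Import all_classical all_reals all_analysis.
Import Order.TTheory GRing.Theory Num.Theory.
Local Open Scope classical_set_scope.
Local Open Scope ring_scope.

Lemma rmax_sub (d : measure_display) (T : measurableType d)
  (R : realType) (P : probability T R) (H : (T -> R) -> R) X Y :
  dominated P H -> @Bb _ T R X -> @Bb _ T R Y ->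
  {ae P, forall x, X x = Y x} ->
  [set H X0 | X0 in [set X0 | @Bb _ T R X0 /\ forall x, X x <= X0 x]] `<=`
  [set H X0 | X0 in [set X0 | @Bb _ T R X0 /\ forall x, Y x <= X0 x]].
Proof.
move=> hD [mX [MX hX]] [mY [MY hY]] hXY r [X0 [[mX0 [M0 h0]] hle] <-].
have hB : @Bb _ T R (X0 \max Y).
  split; first exact: measurable_realfun.measurable_maxr.
  exists (Num.max M0 MY) => x /=.
  rewrite /Order.max; case: ifP => _.
  - by rewrite le_max hY orbT.
  - by rewrite le_max h0.
exists (X0 \max Y); first by split => // x /=; rewrite le_max lexx orbT.
apply: hD => //; first by split; [exact: mX0| exists M0].
apply: filterS hXY => x /= Hx.
by rewrite -Hx; apply/max_idPl.
Qed.

Theorem proposition4p1 (d : measure_display) (T : measurableType d)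
  (R : realType) (P : probability T R) (H : (T -> R) -> R) :
  premium_principle H -> dominated P H -> dominated P (R_Max H).
Proof.
move=> _ hD X Y hX hY hXY; rewrite /R_Max; congr inf.
apply/seteqP; split.
  have h1 := @rmax_sub _ _ _ _ _ X Y hD hX hY hXY.
  exact: h1.
have h2 : {ae P, forall x, Y x = X x}.
  by apply: filterS hXY => x /= Hx; exact: esym Hx.
exact: (@rmax_sub _ _ _ _ _ Y X hD hY hX h2).
Qed.
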